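(* Assume $n>3t+2d$. In any execution of Algorithm 1, if a correct process $p_i$ mbrb-broadcasts an app-message $m$ with sequence number $sn$, then at least one correct process eventually mbrb-delivers $m$ from $p_i$ with sequence number $sn$.
   Context: System model. There are $n$ asynchronous processes $p_1,\dots,p_n$ with distinct known identities. Up to $t$ are Byzantine (arbitrary behavior); the rest are correct; $c$ is the number of correct processes in the execution, $n-t\le c\le n$. The network is fully connected, asynchronous, never corrupts/duplicates/creates messages; ''broadcast $M$'' sends $M$ to all $n$ processes; a message adversary may suppress, per broadcast by a correct process, up to $d$ ($0\le d<c$) copies addressed to correct processes, all other copies among correct processes being eventually received. Signatures are unforgeable and public keys are known. Algorithm 1 (code for $p_i$). Each process stores, for each triplet $(m,sn,j)$, a set of saved valid signatures of that triplet, at most one per signer. On $\mathrm{mbrb\_broadcast}(m,sn)$: $p_i$ saves its own signature of $(m,sn,i)$ and broadcasts $\mathrm{BUNDLE}(m,sn,i,S)$, $S$ the saved signatures for $(m,sn,i)$. On receiving $\mathrm{BUNDLE}(m,sn,j,sigs)$: if $p_i$ has not already mbrb-delivered some $(-,sn,j)$ and $sigs$ contains a valid signature of $(m,sn,j)$ by $p_j$, then: (1) save all new valid signatures of $(m,sn,j)$ in $sigs$; (2) if $p_i$ has not yet signed any $(-,sn,j)$, save its own signature of $(m,sn,j)$ and broadcast $\mathrm{BUNDLE}(m,sn,j,\text{all saved signatures for }(m,sn,j))$; (3) if strictly more than $\frac{n+t}{2}$ signatures for $(m,sn,j)$ are saved, broadcast $\mathrm{BUNDLE}(m,sn,j,\text{all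 saved signatures})$ and mbrb-deliver $(m,sn,j)$. A correct process never uses the same sequence number twice. *)

(* Defs.v *)
From mathcomp Require Import all_boot.
Set Implicit Arguments.
Unset Strict Implicit.
Unset Printing Implicit Defensive.

Section Model.
Variables (n : nat) (M : eqType).

(* A triplet (m, sn, j): app-message m, sequence number sn, sender p_j. *)
Definition triplet := (M * nat * 'I_n)%type.
(* A (valid, symbolic) signature: (signer k, signed triplet). Signatures of a
   correct signer can only exist if that signer signed (unforgeability, see
   [byz_unforgeable] below); invalid signatures are ignored by receivers and
   are therefore not represented. *)
Definition sig := ('I_n * triplet)%type.

Record bundle := Bundle { b_m : M; b_sn : nat; b_j : 'I_n; b_sigs : seq sig }.

Record lstate := LState {
  saved  : seq sig;      (* saved valid signatures (as a multiset; counted up to duplicates) *)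
  mysigs : seq triplet;  (* triplets this process has signed *)
  deliv  : seq triplet
}.

Definition init_state : lstate := LState [::] [::] [::].

(* The saved signatures for tr, at most one per signer. *)
Definition savedFor (st : lstate) (tr : triplet) : seq sig :=
  undup [seq s <- saved st | s.2 == tr].

Definition has_signed_slot (st : lstate) (sn : nat) (j : 'I_n) : bool :=
  has (fun tr : triplet => (tr.1.2 == sn) && (tr.2 == j)) (mysigs st).

Definition has_delivered_slot (st : lstate) (sn : nat) (j : 'I_n) : bool :=
  has (fun tr : triplet => (tr.1.2 == sn) && (tr.2 == j)) (deliv st).

(* Result of a handler: new state, broadcast bundles (in order), delivered triplets. *)
Definition result := (lstate * seq bundle * seq triplet)%type.

Definition on_broadcast (i : 'I_n) (st : lstate) (m : M) (sn : nat) : result :=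
  let tr : triplet := (m, sn, i) in
  let st1 := LState ((i, tr) :: saved st) (tr :: mysigs st) (deliv st) in
  (st1, [:: Bundle m sn i (savedFor st1 tr)], [::]).

Variable t : nat.

Definition on_receive (i : 'I_n) (st : lstate) (b : bundle) : result :=
  let m := b_m b in let sn := b_sn b in let j := b_j b in
  let tr : triplet := (m, sn, j) in
  if ~~ has_delivered_slot st sn j && ((j, tr) \in b_sigs b) then
    let st1 := LState (saved st ++ [seq s <- b_sigs b | s.2 == tr])
                      (mysigs st) (deliv st) in
    let r2 : lstate * seq bundle :=
      if ~~ has_signed_slot st1 sn j then
        let st' := LState ((i, tr) :: saved st1) (tr :: mysigs st1) (deliv st1) in
        (st', [:: Bundle m sn j (savedFor st' tr)])
      else (st1, [::]) in
    let st2 := r2.1 in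
    if n + t < 2 * size (savedFor st2 tr) then
      (LState (saved st2) (mysigs st2) (tr :: deliv st2),
       r2.2 ++ [:: Bundle m sn j (savedFor st2 tr)], [:: tr])
    else (st2, r2.2, [::])
  else (st, [::], [::]).

(* Where a received bundle comes from: the q-th broadcast performed during
   global step k by a correct process, or a Byzantine process. *)
Inductive source := FromCorrect of nat & nat | FromByz.

Inductive event :=
  | Idle
  | Invoke of 'I_n & M & nat
  | Recv of 'I_n & bundle & source.

Definition actor (e : event) : option 'I_n :=
  match e with Idle => None | Invoke i _ _ => Some i | Recv i _ _ => Some i end.

Definition handle (i : 'I_n) (st : lstate) (e : event) : result :=
  match e with
  | Idle => (st, [::], [::])
  | Invoke _ m sn => on_broadcast i st m sn
  | Recv _ b _ => on_receive i st b
  end.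

(* State of p_i before global step k. *)
Fixpoint lst (ev : nat -> event) (i : 'I_n) (k : nat) : lstate :=
  match k with
  | 0 => init_state
  | k'.+1 => if actor (ev k') == Some i then (handle i (lst ev i k') (ev k')).1.1
             else lst ev i k'
  end.

Definition outs (ev : nat -> event) (k : nat) : seq bundle * seq triplet :=
  match actor (ev k) with
  | Some i => let r := handle i (lst ev i k) (ev k) in (r.1.2, r.2)
  | None => ([::], [::])
  end.
Definition bcasts ev k := (outs ev k).1.
Definition delivers ev k := (outs ev k).2.

Record valid_execution (d : nat) (B : {set 'I_n}) (ev : nat -> event) : Prop := {
  invoke_correct : forall k i m sn, ev k = Invoke i m sn -> i \notin B;
  recv_correct : forall k i b s, ev k = Recv i b s -> i \notin B;
  sn_unique : forall k1 k2 i m1 m2 sn,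
    ev k1 = Invoke i m1 sn -> ev k2 = Invoke i m2 sn -> k1 = k2;
  (* no creation / corruption: a copy of an earlier correct broadcast *)
  recv_from_correct : forall k i b k0 q, ev k = Recv i b (FromCorrect k0 q) ->
    k0 < k /\ onth (bcasts ev k0) q = Some b;
  no_dup : forall k1 k2 i b1 b2 k0 q,
    ev k1 = Recv i b1 (FromCorrect k0 q) -> ev k2 = Recv i b2 (FromCorrect k0 q) ->
    k1 = k2;
  byz_exists : forall k i b, ev k = Recv i b FromByz -> exists x, x \in B;
  byz_unforgeable : forall k i b s tr, ev k = Recv i b FromByz ->
    (s, tr) \in b_sigs b -> s \notin B -> tr \in mysigs (lst ev s k);
  (* message adversary: per correct broadcast, at most d correct processes
     never receive their copy; all others eventually receive it *)
  adversary : forall k0 q b, onth (bcasts ev k0) q = Some b ->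
    exists R : {set 'I_n}, [/\ R \subset ~: B, n - #|B| - d <= #|R| &
      forall r, r \in R -> exists k, ev k = Recv r b (FromCorrect k0 q)]
}.

End Model.

(* Main.v *)
Require Import Defs.
From mathcomp Require Import all_boot zify.
From Stdlib Require Import ClassicalEpsilon Classical.
Set Implicit Arguments. Unset Strict Implicit. Unset Printing Implicit Defensive.

Definition le_st {n} {M : eqType} (s s' : lstate n M) :=
  [/\ {subset saved s <= saved s'}, {subset mysigs s <= mysigs s'} & {subset deliv s <= deliv s'}].

Lemma le_st_refl n M (s : lstate n M) : le_st s s.
Proof. by split. Qed.

Lemma le_st_trans n M (s1 s2 s3 : lstate n M) : le_st s1 s2 -> le_st s2 s3 -> le_st s1 s3.
Proof. by move=> [a b c] [a' b' c']; split=> z /[dup] ?; [move/a|move/b|move/c]; auto. Qed.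

Lemma handle_mono n M t x (st : lstate n M) e : le_st st (handle t x st e).1.1.
Proof.
case: e => [|i m sn|i b s] /=; first exact: le_st_refl.
  by split=> z /=; rewrite ?inE => ->; rewrite ?orbT.
rewrite /on_receive; case: ifP => _; last exact: le_st_refl.
case: (~~ has_signed_slot _ _ _) => /=; case: ifP => _ /=;
  by split=> z /= hz; rewrite ?inE ?mem_cat ?hz ?orbT.
Qed.

Definition trb n (M : eqType) (b : bundle n M) : triplet n M := (b_m b, b_sn b, b_j b).

Lemma savedForP n M (st : lstate n M) tr z : z \in savedFor st tr -> z \in saved st /\ z.2 = tr.
Proof. by rewrite /savedFor mem_undup mem_filter => /andP[/eqP ? ?]. Qed.

Lemma savedForI n M (st : lstate n M) tr z : z \in saved st -> z.2 = tr -> z \in savedFor st tr.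
Proof. by move=> h e; rewrite /savedFor mem_undup mem_filter e eqxx. Qed.

Section Recv.
Variables (n t : nat) (M : eqType) (x : 'I_n) (st : lstate n M) (b : bundle n M).
Let r := on_receive t x st b.

Lemma recv_sav z : z \in saved r.1.1 ->
  z \in saved st \/ z \in b_sigs b \/ (z = (x, trb b) /\ trb b \in mysigs r.1.1).
Proof.
rewrite /r /on_receive; case: ifP => _; first last. by left.
case: (~~ has_signed_slot _ _ _) => /=; case: ifP => _ /=;
  rewrite ?inE ?mem_cat ?mem_filter.
all: first [move=> /or3P[/eqP->|h|/andP[_ h]] | move=> /orP[h|/andP[_ h]]];
  by [left | right; left | right; right; rewrite /trb eqxx].
Qed.

Lemma recv_mys z : z \in mysigs r.1.1 ->
  z \in mysigs st \/ [/\ z = trb b, (b_j b, trb b) \in b_sigs b,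
     ~~ has_signed_slot st (b_sn b) (b_j b) &
     exists S, [/\ onth r.1.2 0 = Some (Bundle (b_m b) (b_sn b) (b_j b) S),
                   (x, trb b) \in S & (b_j b, trb b) \in S]].
Proof.
rewrite /r /on_receive; case: ifP => [/andP[_ hin]|_]; last by left.
case E: (~~ has_signed_slot _ _ _) => /=; case: ifP => _ /=; rewrite ?inE;
  try by left.
all: case/orP => [/eqP->|h]; last by left.
all: right; split => //.
all: exists (savedFor (LState ((x, (b_m b, b_sn b, b_j b)) :: (saved st ++ [seq s <- b_sigs b | s.2 == (b_m b, b_sn b, b_j b)])) ((b_m b, b_sn b, b_j b) :: mysigs st) (deliv st)) (b_m b, b_sn b, b_j b)); split => //.
all: apply: savedForI => //=; rewrite inE ?eqxx // mem_cat mem_filter eqxx hin !orbT //.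
Qed.

Lemma recv_delivers z : z \in r.2 -> z = trb b /\ (b_j b, trb b) \in b_sigs b.
Proof.
rewrite /r /on_receive; case: ifP => [/andP[_ hin]|_] //.
by case: (~~ has_signed_slot _ _ _) => /=; case: ifP => _ //=; rewrite inE => /eqP.
Qed.

Lemma recv_del z : z \in deliv r.1.1 -> z \in deliv st \/ z \in r.2.
Proof.
rewrite /r /on_receive; case: ifP => [/andP[_ hin]|_]; last by left.
case: (~~ has_signed_slot _ _ _) => /=; case: ifP => _ //=; try by left.
all: by rewrite !inE => /orP[->|->]; auto.
Qed.

Lemma recv_good : ~~ has_delivered_slot st (b_sn b) (b_j b) -> (b_j b, trb b) \in b_sigs b ->
  [/\ {subset [seq s <- b_sigs b | s.2 == trb b] <= saved r.1.1},
      has_signed_slot r.1.1 (b_sn b) (b_j b) &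
      n + t < 2 * size (savedFor r.1.1 (trb b)) -> trb b \in r.2].
Proof.
move=> hd hin; rewrite /r /on_receive hd hin /= /trb.
case E: (~~ has_signed_slot _ _ _) => /=; case: ifP => hc //=; rewrite ?inE ?eqxx;
  split => //; try (by move=> z hz; rewrite ?in_cons mem_cat hz !orbT);
  try (by rewrite /has_signed_slot /= eqxx eqxx); try by rewrite hc.
all: by move/negbT: E; rewrite negbK.
Qed.
End Recv.

Lemma card_sum (T : finType) (W : {set T}) (P : pred T) :
  #|[set x in W | P x]| = \sum_(x in W) (P x : nat).
Proof.
rewrite -sum1_card [RHS]big_mkcond [LHS]big_mkcond /=; apply: eq_bigr => x _.
by rewrite inE; case: (x \in W); case: (P x).
Qed.

Lemma handle_bsig n M t x (st : lstate n M) e q b :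
  onth (handle t x st e).1.2 q = Some b -> {subset b_sigs b <= saved (handle t x st e).1.1}.
Proof.
case: e => [|i m sn|i bb s] /=; first by rewrite onth0n.
  by case: q => [|q] /=; [case=> <- z /savedForP[] | rewrite onth0n].
rewrite /on_receive; case: ifP => _; last by rewrite onth0n.
case: (~~ has_signed_slot _ _ _) => /=; case: ifP => _ /=;
  by case: q => [|[|q]] /=; rewrite ?onth0n //; case=> <- z /savedForP[].
Qed.

Definition pb (P : Prop) : bool := if excluded_middle_informative P then true else false.
Lemma pbP (P : Prop) : reflect P (pb P).
Proof. by rewrite /pb; case: excluded_middle_informative => h; constructor. Qed.

Section Exec.
Variables (n t d : nat) (M : eqType) (B : {set 'I_n}) (ev : nat -> event n M).
Hypothesis V : valid_execution t d B ev.
Local Notation L := (lst t ev).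

Lemma L_mono x K K' : K <= K' -> le_st (L x K) (L x K').
Proof.
move/subnK <-; elim: (K' - K) => [|j IH]; first exact: le_st_refl.
rewrite addSn /=; case: ifP => _ //; exact: le_st_trans IH (handle_mono _ _ _ _).
Qed.

Lemma L_saved x K K' z : K <= K' -> z \in saved (L x K) -> z \in saved (L x K').
Proof. by move/(L_mono x) => [a _ _]; apply: a. Qed.
Lemma L_mysigs x K K' z : K <= K' -> z \in mysigs (L x K) -> z \in mysigs (L x K').
Proof. by move/(L_mono x) => [_ a _]; apply: a. Qed.

Lemma actor_correct K x : actor (ev K) = Some x -> x \notin B.
Proof.
case E: (ev K) => [|i m sn|i b s] //=; case=> <-.
  exact: (invoke_correct V E).
exact: (recv_correct V E). Qed.

Lemma L_step x K : actor (ev K) = Some x -> L x K.+1 = (handle t x (L x K) (ev K)).1.1.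
Proof. by move=> h /=; rewrite h eqxx. Qed.

Lemma L_other x K : actor (ev K) != Some x -> L x K.+1 = L x K.
Proof. by move=> h /=; rewrite (negbTE h). Qed.

Lemma bsig K q b : onth (bcasts t ev K) q = Some b ->
  exists y, actor (ev K) = Some y /\ {subset b_sigs b <= saved (L y K.+1)}.
Proof.
rewrite /bcasts /outs; case E: (actor (ev K)) => [y|]; last by rewrite onth0n.
move=> h; exists y; split => //; rewrite (L_step E); exact: handle_bsig h.
Qed.

Definition Inv K := forall x s tr, x \notin B -> s \notin B ->
  (s, tr) \in saved (L x K) -> tr \in mysigs (L s K).

Lemma recv_sig K x b src y tr : Inv K -> ev K = Recv x b src ->
  (y, tr) \in b_sigs b -> y \notin B -> tr \in mysigs (L y K).
Proof.
move=> IK E hin hy; case: src E => [k0 q|] E.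
  have [lt hb] := recv_from_correct V E.
  have [z [hz hs]] := bsig hb.
  apply: (IK z) => //; first exact: actor_correct hz.
  exact: L_saved (hs _ hin).
exact: (byz_unforgeable V E hin hy).
Qed.

Lemma inv K : Inv K.
Proof.
elim: K => [|K IK] x s tr hx hs; first by [].
case: (eqVneq (actor (ev K)) (Some x)) => ha; last first.
  by rewrite (L_other ha) => hin; apply: L_mysigs (IK x s tr hx hs hin).
rewrite (L_step ha); set G := L s K.+1.
case E: (ev K) ha => [|i m sn|i b src] //=; case=> ei; subst i.
  rewrite inE => /orP[/eqP [es et]|h]; last by rewrite /G; apply: L_mysigs (IK x s tr hx hs h).
  by rewrite /G es et (L_step (x:=x) (K:=K)) ?E //= inE eqxx.
case/recv_sav => [h|[h|[[es et] h]]].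
- by rewrite /G; apply: L_mysigs (IK x s tr hx hs h).
- by rewrite /G; apply: L_mysigs (recv_sig IK E h hs).
- by rewrite /G es et (L_step (x:=x) (K:=K)) ?E.
Qed.

Lemma sig_own K y tr : y \notin B -> tr \in mysigs (L y K) -> tr.2 = y ->
  exists k0, k0 < K /\ ev k0 = Invoke y tr.1.1 tr.1.2.
Proof.
move=> hy; elim: K => [|K IH] //.
case: (eqVneq (actor (ev K)) (Some y)) => ha; last first.
  by rewrite (L_other ha) => h e; have [k0 [? ?]] := IH h e; exists k0; split => //; apply: ltnW.
rewrite (L_step ha).
case E: (ev K) ha => [|i m sn|i b src] //=; case=> ei; subst i.
  rewrite inE => /orP[/eqP ->|h] e; first by exists K.
  by have [k0 [? ?]] := IH h e; exists k0; split => //; apply: ltnW.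
case/recv_mys => [h|[et hin hns _]] e.
  by have [k0 [? ?]] := IH h e; exists k0; split => //; apply: ltnW.
exfalso; move: hns; rewrite /trb in et hin; rewrite et /= in e; subst y.
have := recv_sig (@inv K) E hin hy.
by move=> hm; apply/negP/negPn/hasP; exists (b_m b, b_sn b, b_j b) => //=; rewrite !eqxx.
Qed.

Lemma del_hist K x z : z \in deliv (L x K) ->
  exists k1, actor (ev k1) = Some x /\ z \in delivers t ev k1.
Proof.
elim: K => [|K IH] //.
case: (eqVneq (actor (ev K)) (Some x)) => ha; last by rewrite (L_other ha).
rewrite (L_step ha).
have hd : delivers t ev K = (handle t x (L x K) (ev K)).2 by rewrite /delivers /outs ha.
case E: (ev K) ha hd => [|i m sn|i b src] //=; case=> ei; subst i => hd.
case/recv_del => h; first exact: IH.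
by exists K; rewrite E hd.
Qed.

Section Main.
Variables (k : nat) (i : 'I_n) (m : M) (sn : nat).
Hypothesis Hk : ev k = Invoke i m sn.
Let tr : triplet n M := (m, sn, i).
Let hi : i \notin B := invoke_correct V Hk.

Lemma only K x b src m'' : ev K = Recv x b src -> (i, (m'', sn, i)) \in b_sigs b -> m'' = m.
Proof.
move=> E hin; have := recv_sig (@inv K) E hin hi => hm.
have [k0 [_ E0]] := sig_own hi hm erefl.
have ek := sn_unique V E0 Hk; subst k0.
by move: E0; rewrite Hk => -[].
Qed.

Hypothesis H : forall k' j, j \notin B -> actor (ev k') = Some j -> tr \notin delivers t ev k'.

Lemma nodel K x : x \notin B -> ~~ has_delivered_slot (L x K) sn i.
Proof.
move=> hx; apply/hasPn => z hz; apply/negP => /andP[/eqP e1 /eqP e2].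
have [k1 [ha hd]] := del_hist hz.
have hx1 : delivers t ev k1 = (handle t x (L x k1) (ev k1)).2 by rewrite /delivers /outs ha.
move: hd; rewrite hx1.
case E: (ev k1) ha => [|i' m' sn'|i' b src] //=; case=> ei; subst i' => hd.
have [ez hin] := recv_delivers hd.
move: z ez e1 e2 hz hd => [[mm ss] jj] ez /= e1 e2 hz hd; subst ss jj.
have ej : i = b_j b by move: ez; rewrite /trb => -[].
move: hin; rewrite -ez -ej => hin.
have emm := only E hin; subst mm.
have ha : actor (ev k1) = Some x by rewrite E.
have := H hx ha; rewrite hx1 E /=.
by rewrite hd.
Qed.

Definition good (b : bundle n M) := (trb b == tr) && ((i, tr) \in b_sigs b).

Lemma recv_good2 K x b src : ev K = Recv x b src -> good b ->
  [/\ forall w, (w, tr) \in b_sigs b -> (w, tr) \in saved (L x K.+1),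
      exists m'', (m'', sn, i) \in mysigs (L x K.+1) &
      n + t < 2 * size (savedFor (L x K.+1) tr) -> tr \in delivers t ev K].
Proof.
move=> E /andP[/eqP et hin].
have hx : x \notin B := recv_correct V E.
have ha : actor (ev K) = Some x by rewrite E.
have hd : delivers t ev K = (handle t x (L x K) (ev K)).2 by rewrite /delivers /outs ha.
rewrite hd (L_step ha) E /=.
have [em esn ej] : [/\ b_m b = m, b_sn b = sn & b_j b = i] by move: et; rewrite /trb => -[].
have hnd := nodel K hx; rewrite -esn -ej in hnd.
have hin' : (b_j b, trb b) \in b_sigs b by rewrite et ej.
have [h1 h2 h3] := @recv_good n t M x (L x K) b hnd hin'.
rewrite et in h1 h3; split => //.
  by move=> w hw; apply: h1; rewrite mem_filter hw eqxx.
move: h2; rewrite esn ej => /hasP [[[mm ss] jj] hm /= /andP[/eqP e1 /eqP e2]].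
by exists mm; subst.
Qed.

Lemma mysig_bundle K x m'' : x \notin B -> (m'', sn, i) \in mysigs (L x K) ->
  exists K0 q b', [/\ onth (bcasts t ev K0) q = Some b', good b' & (x, tr) \in b_sigs b'].
Proof.
move=> hx; elim: K => [|K IH] //.
case: (eqVneq (actor (ev K)) (Some x)) => ha; last by rewrite (L_other ha).
have hb : bcasts t ev K = (handle t x (L x K) (ev K)).1.2 by rewrite /bcasts /outs ha.
rewrite (L_step ha).
case E: (ev K) ha hb => [|i' m0 sn0|i' b src] //=; case=> ei; subst i' => hb.
  rewrite inE => /orP[/eqP [e1 e2 e3]|h]; last exact: IH.
  subst m'' sn0 x.
  have ek := sn_unique V E Hk; subst K.
  move: E; rewrite Hk => -[e]; subst m0.
  exists k, 0, (Bundle m sn i (savedFor (LState ((i, tr) :: saved (L i k)) (tr :: mysigs (L i k)) (deliv (L i k))) tr)).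
  rewrite hb; split => //.
    by rewrite /good /trb /= eqxx /=; apply: savedForI; rewrite ?inE ?eqxx.
  by apply: savedForI; rewrite ?inE ?eqxx.
case/recv_mys => [h|[et hin _ [S [ho hxS hjS]]]]; first exact: IH.
have ej : b_j b = i by move: et; rewrite /trb => -[].
move: hin; rewrite -et ej => hin.
have emm := only E hin; subst m''.
exists K, 0, (Bundle (b_m b) (b_sn b) (b_j b) S); rewrite hb; split => //.
  by rewrite /good /trb /= -/(trb b) -et eqxx /=; move: hjS; rewrite -et ej.
by move: hxS; rewrite -et.
Qed.

Hypotheses (Hn : 3 * t + 2 * d < n) (HB : #|B| <= t) (Hd : d < n - #|B|).
Let c' := n - #|B| - d.

Definition inW x := pb (x \notin B /\ exists K b src, ev K = Recv x b src /\ good b).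
Definition rel w x :=
  pb (exists K b src, [/\ ev K = Recv x b src, good b & (w, tr) \in b_sigs b]).
Let W := [set x | inW x].

Lemma spread K0 q b' : onth (bcasts t ev K0) q = Some b' -> good b' ->
  exists R : {set 'I_n}, c' <= #|R| /\
    forall r, r \in R -> r \in W /\ forall w, (w, tr) \in b_sigs b' -> rel w r.
Proof.
move=> ho g; have [R [hR hc hr]] := adversary V ho.
exists R; split => // r hrR.
have [K' E] := hr r hrR.
have hrB : r \notin B by move/subsetP: hR => /(_ r hrR); rewrite inE.
split; first by rewrite inE; apply/pbP; split => //; exists K', b', (FromCorrect K0 q).
by move=> w hw; apply/pbP; exists K', b', (FromCorrect K0 q).
Qed.

Lemma fanout w : w \in W -> c' <= #|[set x in W | rel w x]|.
Proof.
rewrite inE => /pbP [hw [K [b [src [E g]]]]].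
have [_ [m'' hm] _] := recv_good2 E g.
have [K0 [q [b' [ho g' hwb]]]] := mysig_bundle hw hm.
have [R [hc hR]] := spread ho g'.
apply: (leq_trans hc); apply: subset_leq_card; apply/subsetP => r hr.
by have [h1 h2] := hR r hr; rewrite inE h1 h2.
Qed.

Lemma W_gt0 : 0 < #|W|.
Proof.
have ha : actor (ev k) = Some i by rewrite Hk.
have hm : (m, sn, i) \in mysigs (L i k.+1) by rewrite (L_step ha) Hk /= inE eqxx.
have [K0 [q [b' [ho g' _]]]] := mysig_bundle hi hm.
have [R [hc hR]] := spread ho g'.
have : 0 < #|R| by apply: leq_trans hc; rewrite /c'; lia.
case/card_gt0P => r /hR [hr _]; apply/card_gt0P; by exists r.
Qed.

Lemma collect x (s : seq 'I_n) : (forall w, w \in s -> rel w x) -> s != [::] ->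
  exists K b src, [/\ ev K = Recv x b src, good b &
    forall w, w \in s -> (w, tr) \in saved (L x K.+1)].
Proof.
elim: s => [|w s IH] // hall _.
have := hall w (mem_head _ _) => /pbP [K1 [b1 [src1 [E1 g1 hw1]]]].
have [h1 _ _] := recv_good2 E1 g1.
have hw : (w, tr) \in saved (L x K1.+1) by exact: h1.
case: (eqVneq s [::]) => [->|hs].
  by exists K1, b1, src1; split => // w'; rewrite inE => /eqP ->.
have hall' : forall w', w' \in s -> rel w' x by move=> w' h; apply: hall; rewrite inE h orbT.
have [K2 [b2 [src2 [E2 g2 h2]]]] := IH hall' hs.
case: (leqP K1 K2) => hK.
  exists K2, b2, src2; split => // w'; rewrite inE => /orP[/eqP ->|h]; last exact: h2.
  by apply: L_saved hw.
exists K1, b1, src1; split => // w'; rewrite inE => /orP[/eqP ->|h] //.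
by apply: L_saved (h2 _ h); apply: ltnW.
Qed.

Lemma contra_main : False.
Proof.
case: (boolP [exists x in W, c' <= #|[set w in W | rel w x]|]) => [/existsP [x /andP [hxW hx]]|hno].
  pose S := [set w in W | rel w x].
  have hs : enum S != [::].
    by rewrite -size_eq0 -cardE; apply/negP => /eqP h; move: hx; rewrite -/S h /c'; lia.
  have hallS : forall w, w \in enum S -> rel w x by move=> w; rewrite mem_enum inE => /andP[].
  have [K [b [src [E g hall]]]] := collect hallS hs.
  have [_ _ h3] := recv_good2 E g.
  have hsz : #|S| <= size (savedFor (L x K.+1) tr).
    rewrite cardE -(size_map (fun w => (w, tr))); apply: uniq_leq_size.
      by rewrite map_inj_uniq ?enum_uniq // => a a' [].
    by move=> z /mapP [w hw ->]; apply: savedForI => //; apply: hall.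
  have hx' : x \notin B := recv_correct V E.
  have ha : actor (ev K) = Some x by rewrite E.
  have := H hx' ha; rewrite h3 //.
  move: hx; rewrite -/S /c' => hx; lia.
have hup : forall x, x \in W -> #|[set w in W | rel w x]| <= c' - 1.
  move=> x hx; have := negP hno; move=> hno'.
  case: (leqP c' #|[set w in W | rel w x]|) => h; last by lia.
  by exfalso; apply: hno'; apply/existsP; exists x; rewrite hx.
have h1 : #|W| * c' <= \sum_(w in W) #|[set x in W | rel w x]|.
  rewrite -sum_nat_const; apply: leq_sum => w hw; exact: fanout.
have h2 : \sum_(w in W) #|[set x in W | rel w x]| = \sum_(x in W) #|[set w in W | rel w x]|.
  under eq_bigr do rewrite card_sum.
  rewrite exchange_big /=.
  by apply: eq_bigr => x _; rewrite card_sum.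
have h3 : \sum_(x in W) #|[set w in W | rel w x]| <= #|W| * (c' - 1).
  rewrite -sum_nat_const; apply: leq_sum => x hx; exact: hup.
have := W_gt0; rewrite /c' in h1 h3; nia.
Qed.
End Main.
End Exec.
Unset Implicit Arguments.
Set Strict Implicit.
Theorem mainTheorem5 (n t d : nat) (M : eqType) (B : {set 'I_n})
    (ev : nat -> event n M) :
  3 * t + 2 * d < n ->
  #|B| <= t ->
  d < n - #|B| ->
  valid_execution t d B ev ->
  forall (k : nat) (i : 'I_n) (m : M) (sn : nat),
    ev k = Invoke i m sn ->
    exists (k' : nat) (j : 'I_n),
      [/\ j \notin B, actor (ev k') = Some j & (m, sn, i) \in delivers t ev k'].
Proof.
move=> Hn HB Hd V k i m sn Hk.
apply: NNPP => Hno.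
apply: (contra_main V Hk _ Hn HB Hd).
move=> k' j hj ha; apply/negP => hin; apply: Hno; exists k', j; split => //.
Qed.
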